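(* Let $r,t\ge 2$, let $Wd(r,t)$ be the windmill graph, $n=t(r-1)+1$ its order, and $k$ an integer with $2\le k\le n$. Then $$SW_k(Wd(r,t))=(n-1)\binom{n-1}{k-1}-t\binom{r-1}{k}.$$
   Context: The windmill graph $Wd(r,t)$ is obtained by taking $t$ copies of the complete graph $K_r$ and identifying one vertex from each copy into a single shared vertex. For $S\subseteq V(G)$, the Steiner distance $d(S)$ is the minimum number of edges of a connected subgraph whose vertex set contains $S$, and $SW_k(G)=\sum_{|S|=k} d(S)$. Convention $\binom{m}{l}=0$ for $m<l$. *)

(* Defs.v *)
From mathcomp Require Import all_boot.
Set Implicit Arguments. Unset Strict Implicit. Unset Printing Implicit Defensive.

(* A simple graph is given by a vertex finType T and an adjacency relation
   adj (assumed symmetric and irreflexive by the concrete instances). *)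
Definition graph_edges (T : finType) (adj : rel T) : {set {set T}} :=
  [set e : {set T} | [exists x : T, exists y : T, adj x y && (e == [set x; y])]].

Definition steiner_ok (T : finType) (adj : rel T) (S : {set T})
    (VF : {set T} * {set {set T}}) : bool :=
  [&& VF.2 \subset graph_edges adj,
      [forall e in VF.2, e \subset VF.1],
      S \subset VF.1 &
      [forall x in VF.1, forall y in VF.1,
          connect [rel a b | [set a; b] \in VF.2] x y]].

(* Steiner distance d(S): minimum number of edges of a connected subgraph
   whose vertex set contains S. (The neutral value #|{set T}| only matters
   if no such subgraph exists, which never happens for connected graphs.) *)
Definition steiner_dist (T : finType) (adj : rel T) (S : {set T}) : nat :=
  \big[minn/#|{: {set T}}|]_(VF : {set T} * {set {set T}} | steiner_ok adj S VF)
     #|VF.2|.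

Definition steiner_wiener (T : finType) (adj : rel T) (k : nat) : nat :=
  \sum_(S : {set T} | #|S| == k) steiner_dist adj S.

(* Windmill graph Wd(r,t): vertices are None (the shared centre) and
   Some (i, j) = the j-th non-central vertex of the i-th copy of K_r
   (i < t, j < r - 1). *)
Definition wd_vertex (r t : nat) : finType := option ('I_t * 'I_(r.-1)).

Definition wd_adj (r t : nat) : rel (wd_vertex r t) :=
  fun x y =>
    match x, y with
    | None, None => false
    | None, Some _ => true
    | Some _, None => true
    | Some p, Some q => (p.1 == q.1) && (p.2 != q.2)
    end.

(* Main.v *)
Require Import Defs.
From mathcomp Require Import all_boot.
From mathcomp Require Import zify.
Module G0.

Section Conn.
Variables (T : finType) (V : {set T}) (F : {set {set T}}) (x0 : T).
Hypothesis FV : forall e, e \in F -> e \subset V.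
Hypothesis conn : forall y, y \in V -> connect [rel a b | [set a; b] \in F] x0 y.

Definition Pn y n := [exists p : n.-tuple T, path [rel a b | [set a; b] \in F] x0 p && (last x0 p == y)].

Lemma Qex y : exists n, (y \notin V) || Pn y n.
Proof.
case yV: (y \in V); last by exists 0.
have /connectP [p pp ->] := conn _ yV.
exists (size p); apply/orP; right; apply/existsP; exists (in_tuple p); by rewrite /= pp eqxx.
Qed.

Definition dist y := ex_minn (Qex y).

Lemma distP y : y \in V -> Pn y (dist y).
Proof. by move=> yV; rewrite /dist; case: ex_minnP => m; rewrite yV. Qed.

Lemma dist_min y n : Pn y n -> dist y <= n.
Proof. by move=> H; rewrite /dist; case: ex_minnP => m _; apply; rewrite H orbT. Qed.

Lemma parent y : y \in V -> y != x0 -> exists2 u, [set u; y] \in F & dist u < dist y.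
Proof.
move=> yV ny.
have /existsP [[s /= /eqP sz] /andP [pp /eqP py]] := distP _ yV.
move: sz pp py; case/lastP: s => [|s z] sz pp py.
  by move: ny; rewrite -py eqxx.
move: pp; rewrite rcons_path => /andP [ps Rz].
move: py; rewrite last_rcons => zy; subst z.
exists (last x0 s) => //.
have : dist (last x0 s) <= size s.
  apply: dist_min; apply/existsP; exists (in_tuple s); by rewrite /= ps eqxx.
by rewrite -sz size_rcons.
Qed.

Lemma edges_lb : x0 \in V -> #|V| <= #|F|.+1.
Proof.
move=> x0V.
pose g y := odflt set0 [pick e | (e \in F) && [exists u, (e == [set u; y]) && (dist u < dist y)]].
have gP y : y \in V -> y != x0 -> exists2 u, g y = [set u; y] & (dist u < dist y) && (g y \in F).
  move=> yV ny; rewrite /g; case: pickP => [e /andP [eF /existsP [u /andP [/eqP eu du]]]| none] /=.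
    by subst e; exists u => //; rewrite du eF.
  have [u uF du] := parent _ yV ny; move: (none [set u; y]); rewrite uF /=.
  have -> // : [exists u0, ([set u; y] == [set u0; y]) && (dist u0 < dist y)].
  by apply/existsP; exists u; rewrite eqxx du.
have ginj : {in V :\ x0 &, injective g}.
  move=> y y'; rewrite !in_setD1 => /andP [ny yV] /andP [ny' yV'] eq.
  have [u gu /andP [du _]] := gP y yV ny; have [u' gu' /andP [du' _]] := gP y' yV' ny'.
  case: (eqVneq y y') => // neq.
  have : y \in g y' by rewrite -eq gu set22.
  rewrite gu' in_set2 (negbTE neq) orbF => /eqP yu'.
  have : y' \in g y by rewrite eq gu' set22.
  rewrite gu in_set2 => /orP [/eqP yu | ]; last by rewrite eq_sym (negbTE neq).
  subst; lia.
have sub: [set g y | y in V :\ x0] \subset F.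
  apply/subsetP => _ /imsetP [y yV ->]; move: yV; rewrite in_setD1 => /andP [ny yV].
  by have [_ _ /andP [_ ]] := gP y yV ny.
have := subset_leq_card sub; rewrite card_in_imset // => H.
by rewrite (cardsD1 x0 V) x0V add1n ltnS.
Qed.
End Conn.

End G0.
Import G0.
Module H0.
Set Implicit Arguments. Unset Strict Implicit.

Lemma bigmin_le (I : eqType) (r : seq I) (P : pred I) (F : I -> nat) idx i0 :
  i0 \in r -> P i0 -> \big[minn/idx]_(i <- r | P i) F i <= F i0.
Proof.
elim: r => //= a r IH; rewrite inE big_cons => /orP [/eqP <- | ir] Pi0.
  by rewrite Pi0 geq_minl.
by case: (P a); [rewrite geq_min IH ?orbT | exact: IH].
Qed.

Lemma sd_eq (T : finType) (adj : rel T) S VF0 m :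
  steiner_ok adj S VF0 -> #|VF0.2| = m ->
  (forall VF, steiner_ok adj S VF -> m <= #|VF.2|) -> m <= #|T| ->
  steiner_dist adj S = m.
Proof.
move=> ok0 c0 H mT; apply/eqP; rewrite eqn_leq; apply/andP; split.
  rewrite -c0; exact: bigmin_le (mem_index_enum _) ok0.
apply: (big_ind (fun x => m <= x)) => //.
- apply: (leq_trans mT).
  have <- : #|[set [set x] | x : T]| = #|T| by rewrite card_imset //; exact: set1_inj.
  exact: max_card.
- by move=> a b ha hb; rewrite leq_min ha hb.
Qed.

Lemma ok_lb (T : finType) (adj : rel T) S VF :
  steiner_ok adj S VF -> #|VF.1| <= #|VF.2|.+1.
Proof.
case: VF => V F /and4P [_ /forallP FV _ /forallP C] /=.
case: (set_0Vmem V) => [-> | [x0 x0V]]; first by rewrite cards0.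
apply: (@edges_lb _ V F x0) => // y yV.
by move: (C x0); rewrite x0V /= => /forallP /(_ y); rewrite yV.
Qed.

Lemma star_ok (T : finType) (adj : rel T) (S : {set T}) (c : T) (A : {set T}) :
  S \subset c |: A -> (forall z, z \in A -> adj c z) ->
  steiner_ok adj S (c |: A, [set [set c; z] | z in A]).
Proof.
move=> SV adjA; apply/and4P; split => //=.
- apply/subsetP => _ /imsetP [z zA ->]; rewrite inE; apply/existsP; exists c.
  by apply/existsP; exists z; rewrite adjA ?eqxx.
- apply/forallP => e; apply/implyP => /imsetP [z zA ->].
  by apply/subsetP => x; rewrite !inE => /orP [->|/eqP ->]; rewrite ?zA ?orbT.
have Rcz z : z \in c |: A -> connect [rel a b | [set a; b] \in [set [set c; z0] | z0 in A]] c z /\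
                            connect [rel a b | [set a; b] \in [set [set c; z0] | z0 in A]] z c.
  rewrite !inE => /orP [/eqP -> | zA]; first by split.
  split; apply: connect1 => /=; first exact: imset_f.
  by rewrite setUC; exact: imset_f.
apply/forallP => x; apply/implyP => xV; apply/forallP => y; apply/implyP => yV.
apply: connect_trans (proj2 (Rcz x xV)) (proj1 (Rcz y yV)).
Qed.

Lemma star_card (T : finType) (c : T) (A : {set T}) :
  c \notin A -> #|[set [set c; z] | z in A]| = #|A|.
Proof.
move=> cA; rewrite card_in_imset // => z z' zA z'A e.
have : z \in [set c; z'] by rewrite -e set22.
rewrite in_set2 => /orP [/eqP zc | /eqP //].
by move: cA; rewrite -zc zA.
Qed.

Lemma connect_inv (T : finType) (U : eqType) (e : rel T) (f : T -> U) x y :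
  (forall a b, e a b -> f a = f b) -> connect e x y -> f x = f y.
Proof.
move=> H /connectP [p pp ->]; elim: p x pp => [|a p IH] x //= /andP [exa pp].
by rewrite (H _ _ exa); exact: IH.
Qed.

End H0.
Import H0.
Module W0.

Section W.
Variables r t : nat.
Local Notation T := (wd_vertex r t).
Definition bl (x : T) : option 'I_t := if x is Some p then Some p.1 else None.
Definition B i : {set T} := [set x | bl x == Some i].

Lemma adj_blade i (x y : T) : x \in B i -> y \in B i -> x != y -> wd_adj x y.
Proof.
case: x => [[a b]|]; case: y => [[c d]|]; rewrite !inE //= => /eqP[->] /eqP[->] ne.
by rewrite eqxx /=; apply: contraNneq ne => ->.
Qed.

Lemma edge_bl (S : {set T}) VF : steiner_ok (@wd_adj r t) S VF -> None \notin VF.1 ->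
  forall a b, [set a; b] \in VF.2 -> bl a = bl b.
Proof.
case/and4P => /subsetP FE /forallP FV _ _ NV a b ab.
have /subsetP sub := implyP (FV _) ab.
have := FE _ ab; rewrite inE => /existsP [u /existsP [v /andP [auv /eqP e]]].
have uV : u \in VF.1 by apply: sub; rewrite e set21.
have vV : v \in VF.1 by apply: sub; rewrite e set22.
have huv : bl u = bl v.
  destruct u as [[a1 b1]|]; last by rewrite uV in NV.
  destruct v as [[a2 b2]|]; last by rewrite vV in NV.
  by move: auv => /= /andP [/eqP -> _].
have ha : bl a = bl u.
  have : a \in [set u; v] by rewrite -e set21.
  by rewrite in_set2 => /orP [/eqP -> | /eqP ->].
have hb : bl b = bl u.
  have : b \in [set u; v] by rewrite -e set22.
  by rewrite in_set2 => /orP [/eqP -> | /eqP ->].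
by rewrite ha hb.
Qed.

Lemma dist_val (S : {set T}) : S != set0 ->
  steiner_dist (@wd_adj r t) S + (None \in S) + [exists i, S \subset B i] = #|S|.
Proof.
move=> S0.
have lb VF : steiner_ok (@wd_adj r t) S VF -> #|S| <= #|VF.2|.+1.
  move=> ok; have := ok_lb ok; have : #|S| <= #|VF.1|; last lia; apply: subset_leq_card.
  by case/and4P: ok.
have S1 : 0 < #|S| by rewrite card_gt0.
case NS: (None \in S).
  have -> : [exists i, S \subset B i] = false.
    apply/negbTE/existsP => [[i /subsetP /(_ _ NS)]]; by rewrite inE.
  rewrite (@sd_eq _ _ S (None |: (S :\ None), [set [set None; z] | z in S :\ None]) (#|S| - 1)).
  - lia.
  - apply: star_ok; first by rewrite setD1K.
    by move=> [z|]; rewrite // setD11.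
  - by rewrite /= star_card ?setD11 // (cardsD1 None S) NS add1n subn1.
  - by move=> VF /lb; lia.
  - exact: leq_trans (leq_subr 1 #|S|) (max_card _).
case E: [exists i, S \subset B i].
  case/existsP: E => i Si.
  have [s0 s0S] : exists s0, s0 \in S by case: (set_0Vmem S) S0 => [->|[x xS]]; [rewrite eqxx|exists x].
  rewrite (@sd_eq _ _ S (s0 |: (S :\ s0), [set [set s0; z] | z in S :\ s0]) (#|S| - 1)).
  - lia.
  - apply: star_ok; first by rewrite setD1K.
    move=> z; rewrite in_setD1 => /andP [zs zS]; apply: (adj_blade i).
    + exact: (subsetP Si).
    + exact: (subsetP Si).
    + by rewrite eq_sym.
  - by rewrite /= star_card ?setD11 // (cardsD1 s0 S) s0S add1n subn1.
  - by move=> VF /lb; lia.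
  - exact: leq_trans (leq_subr 1 #|S|) (max_card _).
have [s0 s0S] : exists s0, s0 \in S by case: (set_0Vmem S) S0 => [->|[x xS]]; [rewrite eqxx|exists x].
have [i bs0] : exists i, bl s0 = Some i.
  by case: s0 s0S => [[i j] _|]; [exists i | rewrite NS].
have [x xS bx] : exists2 x, x \in S & bl x != Some i.
  move/negbT: E; rewrite negb_exists => /forallP /(_ i) /subsetPn [x xS xB].
  by exists x => //; move: xB; rewrite inE.
rewrite (@sd_eq _ _ S (None |: S, [set [set None; z] | z in S]) #|S|).
- lia.
- apply: star_ok; first exact: subsetUr.
  by move=> [z|]; rewrite // NS.
- by rewrite /= star_card ?NS.
- move=> VF ok.
  case NV: (None \in VF.1).
    have : #|None |: S| <= #|VF.1|.
      apply: subset_leq_card; rewrite subUset sub1set NV /=; by case/and4P: ok.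
    rewrite cardsU1 NS /= add1n => h; have h2 := ok_lb ok; rewrite -ltnS; exact: leq_trans h h2.
  have := ok; case/and4P => _ _ /subsetP SV /forallP /(_ s0) /implyP /(_ (SV _ s0S)) /forallP /(_ x) /implyP /(_ (SV _ xS)) C.
  have := connect_inv (f := bl) (@edge_bl S VF ok (negbT NV)) C.
  by rewrite bs0 => hx; move: bx; rewrite -hx eqxx.
- exact: max_card.
Qed.
End W.

End W0.
Import W0.

Lemma sum_bool (I : finType) (P Q : pred I) :
  \sum_(i | P i) (Q i : nat) = #|[set i | P i && Q i]|.
Proof.
transitivity (\sum_(i | P i) (if Q i then 1 else 0)); first by apply: eq_bigr => i _; case: (Q i).
rewrite -big_mkcondr -sum1_card; apply: eq_bigl => i; by rewrite inE.
Qed.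

Theorem mainTheorem7 (r t k : nat) :
  2 <= r -> 2 <= t ->
  2 <= k <= t * (r - 1) + 1 ->
  steiner_wiener (@wd_adj r t) k =
    (t * (r - 1) + 1 - 1) * 'C(t * (r - 1) + 1 - 1, k - 1) - t * 'C(r - 1, k).
Proof.
move=> r2 t2 /andP [k2 kn].
set T := wd_vertex r t.
have cT : #|T| = (t * (r - 1)).+1 by rewrite /T /wd_vertex card_option card_prod !card_ord subn1.
have cB (i : 'I_t) : #|B r t i| = r - 1.
  have -> : B r t i = [set Some (i, j) | j : 'I_r.-1].
    apply/setP => [[[i' j]|]]; rewrite inE /=.
      apply/eqP/imsetP => [[->]|[j' _ [-> _]]] //; by exists j.
    by apply/esym/imsetP => [[j' _]].
  by rewrite card_imset ?card_ord ?subn1 // => j j' [].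
have nz (S : {set T}) : #|S| == k -> S != set0.
  by move=> /eqP hS; apply/eqP => S0; move: hS; rewrite S0 cards0; lia.
have E1 : \sum_(S : {set T} | #|S| == k)
    (steiner_dist (@wd_adj r t) S + (None \in S) + [exists i, S \subset B r t i]) = k * 'C(#|T|, k).
  rewrite (eq_bigr (fun _ => k)); last by move=> S hS; rewrite (@dist_val r t S) ?(eqP hS) ?nz.
  have := sum_nat_const [pred S : {set T} | #|S| == k] k => /= ->.
  by rewrite -cardsE card_draws mulnC.
have Ea : \sum_(S : {set T} | #|S| == k) (None \in S) + 'C(#|T| - 1, k) = 'C(#|T|, k).
  rewrite -card_draws.
  have -> : 'C(#|T| - 1, k) = #|[set S : {set T} | (#|S| == k) && (None \notin S)]|.
    rewrite subn1 -(cardsC1 (None : T)) -cards_draws; apply: eq_card => S; rewrite !inE.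
    by rewrite subsetC sub1set inE andbC.
  rewrite sum_bool.
  rewrite -[in RHS](cardsID [set S : {set T} | None \in S]).
  by congr (_ + _); apply: eq_card => S; rewrite !inE // andbC.
have Eb : \sum_(S : {set T} | #|S| == k) [exists i, S \subset B r t i] = t * 'C(r - 1, k).
  transitivity (\sum_(S : {set T} | #|S| == k) \sum_(i < t) (S \subset B r t i : nat)).
    apply: eq_bigr => S hS; case: existsP => [[i Si]|none].
      rewrite (bigD1 i) //= Si big1 // => j ji; apply/eqP; rewrite eqb0; apply/negP => Sj.
      have [s sS] : exists s, s \in S.
        by case: (set_0Vmem S) (nz S hS) => [->|[x xS]]; [rewrite eqxx|exists x].
      move: (subsetP Si s sS) (subsetP Sj s sS); rewrite !inE => /eqP -> /eqP [] ij.
      by move: ji; rewrite ij eqxx.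
    rewrite big1 // => j _; apply/eqP; rewrite eqb0; apply/negP => Sj; apply: none; by exists j.
  rewrite exchange_big /= (eq_bigr (fun _ => 'C(r - 1, k))).
    by rewrite sum_nat_const card_ord.
  move=> i _; rewrite sum_bool -(cB i) -cards_draws; apply: eq_card => S; rewrite !inE andbC //.
rewrite !big_split /= Eb -/(steiner_wiener _ _) in E1.
move: E1 Ea; rewrite cT !subn1 /= !addn1 /=; clear nz cB cT Eb.
case: k k2 kn => [|k'] // _ _; rewrite /= binS.
have := mul_bin_diag (t * r.-1).+1 k'; rewrite /= binS => hm.
set N := t * r.-1 in hm *.
move=> E1 Ea; rewrite -hm mulSn in E1.
lia.
Qed.
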